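(* Let $G$ be a finite group and let $g\mapsto U_g$ be a unitary representation of $G$ on a finite-dimensional Hilbert space $\mathcal{H}$. Let $\mathcal{R}$ be a finite-dimensional reference Hilbert space, and suppose that, with $\hat{G}$ the set of inequivalent irreducible representations of $G$, there is a unitary identification $$\mathcal{H}\otimes\mathcal{R}\cong\bigoplus_{\mu\in\hat G}\mathcal{H}_\mu\otimes\mathbb{C}^{d_\mu},$$ under which $U_g\otimes I_{\mathcal{R}}$ acts as $\bigoplus_{\mu\in\hat G}U^\mu_g\otimes I_{\mathbb{C}^{d_\mu}}$, where $U^\mu$ is the irreducible representation $\mu$ on $\mathcal{H}_\mu$ and $d_\mu=\dim\mathcal{H}_\mu$. For each $\mu$ fix orthonormal bases $\{|\psi^\mu_j\rangle\}_{j=1}^{d_\mu}$ of $\mathcal{H}_\mu$ and $\{|\phi^\mu_j\rangle\}_{j=1}^{d_\mu}$ of $\mathbb{C}^{d_\mu}$, and let $|V_\mu\rangle\!\rangle:=\sum_{j=1}^{d_\mu}|\psi^\mu_j\rangle|\phi^\mu_j\rangle\in\mathcal{H}_\mu\otimes\mathbb{C}^{d_\mu}$. Let $$|\psi\rangle=\bigoplus_{\mu\in\hat G}\frac{a_\mu}{\sqrt{d_\mu}}|V_\mu\rangle\!\rangle\in\mathcal{H}\otimes\mathcal{R},\qquad a_\mu\in\mathbb{C},\ \sum_{\mu}|a_\mu|^2=1,$$ and let $\mu_0\in\hat G$ be such that $d_{\mu_0}|a_{\mu_0}|\ge d_\mu|a_\mu|$ for all $\mu\in\hat G$. For $g\in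 G$ set $|u_g\rangle:=(U_g\otimes I_{\mathcal{R}})|\psi\rangle$. If $$d_{\mu_0}|a_{\mu_0}|\le\sum_{\mu\in\hat G,\ \mu\neq\mu_0}d_\mu|a_\mu|,$$ then conclusive single-state exclusion of the set $\{|u_g\rangle: g\in G\}$ can be done, i.e., there exists a POVM $\{M_g\}_{g\in G}$ on $\mathcal{H}\otimes\mathcal{R}$ (so $M_g\ge 0$ and $\sum_{g\in G}M_g=I$) such that $\langle u_g|M_g|u_g\rangle=0$ for every $g\in G$.
   Context: Conclusive single-state exclusion of a finite set of pure states $\{|u_g\rangle\}_{g\in G}$ means the existence of a POVM $\{M_g\}_{g\in G}$ (positive semidefinite operators summing to the identity) with $\operatorname{tr}[M_g|u_g\rangle\langle u_g|]=0$ for all $g$; equivalently, the minimum of $\sum_g\operatorname{tr}[M_g|u_g\rangle\langle u_g|]$ over all POVMs is $0$. The vector $|V_\mu\rangle\!\rangle$ is an (unnormalized) maximally entangled vector between the irreducible space $\mathcal{H}_\mu$ and the multiplicity space $\mathbb{C}^{d_\mu}$. *)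

(* Defs.v *)
From HB Require Import structures.
From mathcomp Require Import all_boot all_order all_algebra all_fingroup algC.
From mathcomp Require Import mxrepresentation classfun.
Set Implicit Arguments.
Unset Strict Implicit.
Unset Printing Implicit Defensive.
Import GRing.Theory Num.Theory Num.Def.
Local Open Scope ring_scope.

(* A vector of C^T is a function T -> algC, and a
   linear map C^T2 -> C^T1 is its matrix, a function T1 -> T2 -> algC. *)
Definition lmap (T1 T2 : finType) := T1 -> T2 -> algC.

Definition lapply (T1 T2 : finType) (A : lmap T1 T2) (v : T2 -> algC)
  : T1 -> algC := fun x => \sum_y A x y * v y.

Definition lcomp (T1 T2 T3 : finType) (A : lmap T1 T2) (B : lmap T2 T3)
  : lmap T1 T3 := fun x z => \sum_y A x y * B y z.

Definition ladj (T1 T2 : finType) (A : lmap T1 T2) : lmap T2 T1 :=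
  fun y x => (A x y)^*.

Definition lid (T : finType) : lmap T T := fun x y => (x == y)%:R.

Definition inner (T : finType) (v w : T -> algC) : algC :=
  \sum_x (v x)^* * w x.

Definition lunitary (T1 T2 : finType) (W : lmap T1 T2) :=
  (forall y y', lcomp (ladj W) W y y' = lid y y') /\
  (forall x x', lcomp W (ladj W) x x' = lid x x').

Definition psd (T : finType) (A : lmap T T) :=
  forall v : T -> algC, 0 <= inner v (lapply A v).

Definition adjmx n (A : 'M[algC]_n) : 'M[algC]_n := (map_mx conjC A)^T.

Definition unitary_mx n (A : 'M[algC]_n) := A *m adjmx A = 1%:M.

(* A ⊗ I_R acting on C^n ⊗ C^m, the latter indexed by 'I_n * 'I_m *)
Definition tens_id n m (A : 'M[algC]_n) : lmap ('I_n * 'I_m)%type ('I_n * 'I_m)%type :=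
  fun x y => A x.1 y.1 * (x.2 == y.2)%:R.

(* The space ⊕_{μ ∈ I} H_μ ⊗ C^{d_μ}, with H_μ = C^{d_μ}: coordinates are
   triples (μ, j, k) with j, k < d μ. *)
Definition dsum_idx (I : finType) (d : I -> nat) : finType :=
  {i : I & ('I_(d i) * 'I_(d i))%type}.

(* entry of a square matrix at natural-number indices (0 out of range) *)
Definition mxnat p (A : 'M[algC]_p) (i j : nat) : algC :=
  match (insub i : option 'I_p), (insub j : option 'I_p) with
  | Some i', Some j' => A i' j'
  | _, _ => 0
  end.

(* ⊕_μ A_μ ⊗ I_{C^{d_μ}} *)
Definition blk_tens_id (I : finType) (d : I -> nat)
    (A : forall i, 'M[algC]_(d i)) : lmap (dsum_idx d) (dsum_idx d) :=
  fun x y =>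
    if tag x == tag y then
      mxnat (A (tag x)) (tagged x).1 (tagged y).1
        * ((nat_of_ord (tagged x).2 == nat_of_ord (tagged y).2))%:R
    else 0.

(* |V_μ>> = Σ_l |ψ^μ_l>|φ^μ_l>, where the l-th column of Psi (resp. Phi)
   is the coordinate vector of ψ^μ_l (resp. φ^μ_l). *)
Definition maxent p (Psi Phi : 'M[algC]_p) (j k : 'I_p) : algC :=
  \sum_(l < p) Psi j l * Phi k l.

Definition psi_dsum (I : finType) (d : I -> nat) (a : I -> algC)
    (Psi Phi : forall i, 'M[algC]_(d i)) : dsum_idx d -> algC :=
  fun x => a (tag x) / sqrtC (d (tag x))%:R
           * maxent (Psi (tag x)) (Phi (tag x)) (tagged x).1 (tagged x).2.

(* Main.v *)
Require Import Defs.
From HB Require Import structures.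
From mathcomp Require Import all_boot all_order all_algebra all_fingroup algC.
From mathcomp Require Import mxrepresentation classfun.
From mathcomp Require Import ring lra.
Import GRing.Theory Num.Theory Num.Def.
Local Open Scope ring_scope.


Lemma algR_leE (x y : algR) : (x <= y) = (algRval x <= algRval y).
Proof. by []. Qed.

Lemma phase (w : algC) : exists e, `|e| = 1 /\ w = e * `|w|.
Proof.
have [->|nz] := eqVneq w 0; first by exists 1; rewrite normr1 normr0 mulr0.
exists (w / `|w|); split; first by rewrite normf_div normr_id divff // normr_eq0.
by rewrite divfK // normr_eq0.
Qed.

Lemma norm_rect (x h B : algR) : 0 <= B -> x ^+ 2 + h ^+ 2 = B ^+ 2 ->
  `|algRval x + 'i * algRval h| = algRval B.
Proof.
move=> B0 e.
have e2 : `|algRval x + 'i * algRval h| ^+ 2 = algRval B ^+ 2.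
  rewrite normC2_rect ?algRvalP //.
  by have := congr1 algRval e; rewrite rmorphD !rmorphXn => H; exact: H.
apply/eqP; rewrite -(eqrXn2 (n:=2)) //; first by rewrite e2.
Qed.

Lemma triangle (A B C : algR) : 0 <= A -> 0 <= B -> 0 <= C ->
  B - C <= A -> C - B <= A -> A <= B + C ->
  exists zA zB zC : algC, [/\ `|zA| = 1, `|zB| = 1, `|zC| = 1 &
    zA * algRval A + zB * algRval B + zC * algRval C = 0].
Proof.
move=> A0 B0 C0 H1 H2 H3.
have [A00|Apos] := eqVneq A 0.
  have BC : B = C by lra.
  exists 1, 1, (-1); rewrite normrN normr1 A00 BC rmorph0; split => //.
  by rewrite mulr0 add0r mul1r mulN1r subrr.
have Agt : 0 < A by rewrite lt0r Apos.
pose x := (A ^+ 2 + B ^+ 2 - C ^+ 2) / (2 * A).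
pose y := A - x.
have ex : 2 * A * x = A ^+ 2 + B ^+ 2 - C ^+ 2.
  by rewrite /x mulrC divfK // mulf_neq0 // pnatr_eq0.
have hpos : 0 <= B ^+ 2 - x ^+ 2.
  have k : (2 * A) ^+ 2 * (B ^+ 2 - x ^+ 2) =
           (C ^+ 2 - (A - B) ^+ 2) * ((A + B) ^+ 2 - C ^+ 2).
    have -> : (2 * A) ^+ 2 * (B ^+ 2 - x ^+ 2) = (2 * A) ^+ 2 * B ^+ 2 - (2 * A * x) ^+ 2.
      by rewrite exprMn; ring.
    rewrite ex; ring.
  have p1 : 0 <= C ^+ 2 - (A - B) ^+ 2 by nra.
  have p2 : 0 <= (A + B) ^+ 2 - C ^+ 2 by nra.
  have : 0 <= (2 * A) ^+ 2 * (B ^+ 2 - x ^+ 2) by rewrite k; exact: mulr_ge0.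
  rewrite pmulr_rge0 //; exact: exprn_gt0 (mulr_gt0 _ Agt).
pose h := Num.sqrt (B ^+ 2 - x ^+ 2).
have h2 : h ^+ 2 = B ^+ 2 - x ^+ 2 by rewrite sqr_sqrtr.
have e1 : x ^+ 2 + h ^+ 2 = B ^+ 2 by rewrite h2; ring.
have e2 : y ^+ 2 + (- h) ^+ 2 = C ^+ 2.
  rewrite sqrrN h2 /y.
  have -> : (A - x) ^+ 2 + (B ^+ 2 - x ^+ 2) = A ^+ 2 - 2 * A * x + B ^+ 2 by ring.
  rewrite ex; ring.
have n1 := @norm_rect _ _ _ B0 e1.
have n2 := @norm_rect _ _ _ C0 e2.
have [eB [eB1 HB]] := phase (algRval x + 'i * algRval h).
have [eC [eC1 HC]] := phase (algRval y + 'i * algRval (- h)).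
exists (-1), eB, eC; split => //; first by rewrite normrN normr1.
rewrite -n1 -HB -n2 -HC /y rmorphN rmorphB /=.
ring.
Qed.

Lemma signs (I : eqType) (r : I -> algR) (A : algR) (s : seq I) : 0 <= A ->
  uniq s -> (forall i, i \in s -> 0 <= r i <= A) ->
  exists f : I -> bool, `|\sum_(i <- s) (if f i then r i else - r i)| <= A.
Proof.
move=> A0; elim: s => [|i s IH] /=.
  by move=> _ _; exists (fun _ => true); rewrite big_nil normr0.
case/andP=> nis us hr.
have [f hf] := IH us (fun j js => hr j (@mem_behead _ (i :: s) _ js)).
pose D := \sum_(j <- s) (if f j then r j else - r j).
have /andP [ri0 riA] := hr i (mem_head _ _).
exists (fun j => if j == i then D < 0 else f j).
rewrite big_cons eqxx.
have -> : \sum_(j <- s) (if (if j == i then D < 0 else f j) then r j else - r j) = D.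
  apply: eq_big_seq => j js.
  by have -> : (j == i) = false by apply/eqP => eji; rewrite -eji js in nis.
move: hf; rewrite -/D !ler_norml => /andP [h1 h2].
by case: ltrP => hD; apply/andP; split; lra.
Qed.

Lemma polygon (I : finType) (r : I -> algR) (mu0 : I) :
  (forall i, 0 <= r i) -> (forall i, r i <= r mu0) ->
  r mu0 <= \sum_(i | i != mu0) r i ->
  exists z : I -> algC, (forall i, `|z i| = 1) /\
    \sum_i z i * algRval (r i) = 0.
Proof.
move=> r0 rmax rsum.
have [f hf] := @signs I r (r mu0) (enum (predC1 mu0)) (r0 mu0) (enum_uniq _)
  (fun i _ => (introT andP (conj (r0 i) (rmax i)))).
rewrite big_enum /= in hf.
pose B := \sum_(i | (i != mu0) && f i) r i.
pose C := \sum_(i | (i != mu0) && ~~ f i) r i.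
have eS : \sum_(i | i != mu0) r i = B + C by rewrite (bigID f).
have eD : \sum_(i in predC1 mu0) (if f i then r i else - r i) = B - C.
  rewrite (bigID f) /= -sumrN; congr (_ + _); apply: eq_bigr => i /andP [_ fi].
    by rewrite fi.
  by rewrite (negbTE fi).
rewrite eD ler_norml in hf; case/andP: hf => h1 h2.
have B0 : 0 <= B by apply: sumr_ge0.
have C0 : 0 <= C by apply: sumr_ge0.
have [zA [zB [zC [nA nB nC e]]]] := @triangle (r mu0) B C (r0 mu0) B0 C0
  ltac:(lra) ltac:(lra) ltac:(lra).
exists (fun i => if i == mu0 then zA else if f i then zB else zC); split.
  by move=> i; case: eqP; case: (f i).
rewrite (bigD1 mu0) //= eqxx (bigID f) /= -[RHS]e -addrA; congr (_ + (_ + _)).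
  rewrite /B rmorph_sum mulr_sumr; apply: eq_bigr => i /andP [/negbTE -> ->] //.
rewrite /C rmorph_sum mulr_sumr; apply: eq_bigr => i /andP [/negbTE -> /negbTE ->] //.
Qed.

Set Implicit Arguments.
Unset Strict Implicit.
Unset Printing Implicit Defensive.


Definition radj p q (A : 'M[algC]_(p,q)) : 'M[algC]_(q,p) := (map_mx conjC A)^T.

Lemma radjM p q r (A : 'M[algC]_(p,q)) (B : 'M[algC]_(q,r)) :
  radj (A *m B) = radj B *m radj A.
Proof. by rewrite /radj map_mxM trmx_mul. Qed.

Lemma radjK p q (A : 'M[algC]_(p,q)) : radj (radj A) = A.
Proof. by apply/matrixP => i j; rewrite !mxE conjCK. Qed.

Lemma radj_eq0 p q (T : 'M[algC]_(p,q)) : T *m radj T = 0 -> T = 0.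
Proof.
move=> H.
have : \tr (T *m radj T) = 0 by rewrite H mxtrace0.
rewrite /mxtrace.
have hge : forall i, 0 <= (T *m radj T) i i.
  move=> i; rewrite !mxE; apply: sumr_ge0 => j _; rewrite !mxE; exact: mul_conjC_ge0.
move/eqP; rewrite psumr_eq0 //; move/allP => H0.
apply/matrixP => i j; rewrite mxE.
have := H0 i (mem_index_enum _); rewrite /= mxE psumr_eq0.
  move/allP/(_ j (mem_index_enum _)); rewrite /= !mxE mulf_eq0 conjC_eq0 orbb.
  by move/eqP.
by move=> k _; rewrite !mxE; exact: mul_conjC_ge0.
Qed.

Section Schur.
Variables (gT : finGroupType) (G : {group gT}).

Definition unitary_rep p (r : mx_representation algC G p) :=
  forall g, g \in G -> unitary_mx (r g).

Lemma repr_inv p (r : mx_representation algC G p) g :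
  unitary_rep r -> g \in G -> r (g^-1)%g = radj (r g).
Proof.
move=> ur Gg; rewrite repr_mxV //.
have uU := ur g Gg; have [Uu _] := mulmx1_unit uU.
by rewrite -[invmx _]mulmx1 -uU mulmxA mulVmx // mul1mx.
Qed.

Definition avg p q (r1 : mx_representation algC G p)
  (r2 : mx_representation algC G q) (X : 'M[algC]_(p,q)) :=
  \sum_(g in G) r1 g *m X *m radj (r2 g).

Lemma avg_inter p q (r1 : mx_representation algC G p)
  (r2 : mx_representation algC G q) X h :
  unitary_rep r2 -> h \in G -> r1 h *m avg r1 r2 X = avg r1 r2 X *m r2 h.
Proof.
move=> u2 Gh; rewrite /avg mulmx_sumr mulmx_suml.
rewrite [RHS](reindex_inj (mulgI h)) /=.
apply: eq_big => [g|g Gg]; first by rewrite groupMl.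
rewrite -!repr_inv // ?groupM // ?groupV //.
rewrite (repr_mxM r1) // -(mulmxA _ (r2 _)) -(repr_mxM r2) ?groupV ?groupM // invMg -mulgA mulVg mulg1 !mulmxA.
by [].
Qed.

Lemma avg_scalar p (r : mx_representation algC G p) (X : 'M[algC]_p) :
  mx_irreducible r -> unitary_rep r ->
  avg r r X = (#|G|%:R * \tr X / p%:R)%:M.
Proof.
move=> irr ur.
have abs := group_closure_closed_field irr.
have cent : centgmx r (avg r r X).
  by apply/centgmxP => x Gx; rewrite avg_inter.
have /is_scalar_mxP [c Hc] := mx_abs_irr_cent_scalar abs cent.
have p0 : (0 < p)%N by case/mx_irrP: irr.
have tr : \tr (avg r r X) = #|G|%:R * \tr X.
  rewrite /avg raddf_sum /=.
  rewrite (eq_bigr (fun _ => \tr X)); last first.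
    move=> g Gg; rewrite mxtrace_mulC mulmxA.
    by rewrite (mulmx1C (ur g Gg)) mul1mx.
  by rewrite sumr_const mulr_natl.
rewrite Hc; congr (_%:M).
move: tr; rewrite Hc mxtrace_scalar => <-.
by rewrite -[c *+ p]mulr_natr mulfK // pnatr_eq0 -lt0n.
Qed.

Lemma avg_zero p q (r1 : mx_representation algC G p)
  (r2 : mx_representation algC G q) X :
  mx_irreducible r1 -> mx_irreducible r2 -> unitary_rep r1 -> unitary_rep r2 ->
  ~ mx_rsim r1 r2 -> avg r1 r2 X = 0.
Proof.
move=> i1 i2 u1 u2 nsim.
set T := avg r1 r2 X.
have [//|nzT] := eqVneq T 0; exfalso; apply: nsim.
have iT : forall h, h \in G -> r1 h *m T = T *m r2 h by move=> h Gh; apply: avg_inter.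
have iT' : forall h, h \in G -> radj T *m r1 h = r2 h *m radj T.
  move=> h Gh; have := iT _ (groupVr Gh); rewrite !repr_inv // => /(congr1 (@radj _ _)).
  by rewrite !radjM !radjK.
have cP : centgmx r1 (T *m radj T).
  by apply/centgmxP => x Gx; rewrite -mulmxA iT' // mulmxA -iT // mulmxA.
have cQ : centgmx r2 (radj T *m T).
  by apply/centgmxP => x Gx; rewrite -mulmxA -iT // mulmxA iT' // mulmxA.
have nzP : T *m radj T != 0 by apply: contra nzT => /eqP/radj_eq0 ->.
have nzQ : radj T *m T != 0.
  apply: contra nzT => /eqP H.
  have H' : radj T = 0 by apply: radj_eq0; rewrite radjK.
  apply/eqP/matrixP => i j; have := congr1 (fun M : 'M[algC]_(q,p) => M j i) H'.
  by rewrite !mxE => /eqP; rewrite conjC_eq0 => /eqP.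
have uP := mx_Schur i1 cP nzP.
have uQ := mx_Schur i2 cQ nzQ.
have rP : \rank (T *m radj T) = p by rewrite mxrank_unit.
have rQ : \rank (radj T *m T) = q by rewrite mxrank_unit.
have l1 : (p <= \rank T)%N by rewrite -{1}rP mxrankM_maxl.
have l2 : (q <= \rank T)%N by rewrite -{1}rQ mxrankM_maxr.
have l3 := rank_leq_row T.
have l4 := rank_leq_col T.
have epq : p = q by apply/eqP; rewrite eqn_leq (leq_trans l1 l4) (leq_trans l2 l3).
apply: (MxReprSim (B := T) epq) => //.
by rewrite /row_free eqn_leq l1 andbT; exact: l3.
Qed.

End Schur.


Lemma inner_iso (T1 T2 : finType) (A : lmap T1 T2) (v v' : T2 -> algC) :
  (forall y y', \sum_x (A x y)^* * A x y' = lid y y') ->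
  inner (lapply A v) (lapply A v') = inner v v'.
Proof.
move=> H; rewrite /inner /lapply.
transitivity (\sum_x \sum_y \sum_y' (((A x y)^* * A x y') * ((v y)^* * v' y'))).
  apply: eq_bigr => x _; rewrite rmorph_sum mulr_suml; apply: eq_bigr => y _.
  rewrite mulr_sumr; apply: eq_bigr => y' _; rewrite rmorphM; ring.
rewrite exchange_big; apply: eq_bigr => y _; rewrite exchange_big /=.
rewrite (eq_bigr (fun y' => lid y y' * ((v y)^* * v' y'))); last first.
  by move=> y' _; rewrite -mulr_suml H.
rewrite (bigD1 y) //= big1 => [|y' ne]; first by rewrite /lid eqxx mul1r addr0.
by rewrite /lid eq_sym (negbTE ne) mul0r.
Qed.

Lemma rank1_inner (T : finType) (v z : T -> algC) :
  inner z (lapply (fun x y => v x * (v y)^*) z) = (inner v z)^* * inner v z.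
Proof.
rewrite /inner /lapply.
transitivity (\sum_x (z x)^* * v x * \sum_y (v y)^* * z y).
  apply: eq_bigr => x _; rewrite -mulrA; congr (_ * _).
  by rewrite mulr_sumr; apply: eq_bigr => y _; rewrite mulrA.
rewrite -mulr_suml; congr (_ * _); rewrite rmorph_sum; apply: eq_bigr => x _.
by rewrite rmorphM /= conjCK mulrC.
Qed.

Lemma rank1_psd (T : finType) (v : T -> algC) : psd (fun x y => v x * (v y)^*).
Proof. by move=> z; rewrite rank1_inner mulrC; exact: mul_conjC_ge0. Qed.

Lemma tens_unitary n m (A : 'M[algC]_n) : unitary_mx A ->
  forall y y', \sum_x ((@tens_id n m A) x y)^* * (@tens_id n m A) x y' = lid y y'.
Proof.
move=> uA [y1 y2] [y1' y2']; rewrite /tens_id /lid /=.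
rewrite -(pair_big xpredT xpredT (fun x1 x2 =>
  (A x1 y1 * (x2 == y2)%:R)^* * (A x1 y1' * (x2 == y2')%:R))) /=.
transitivity (\sum_x1 (A x1 y1)^* * A x1 y1' * (y2 == y2')%:R).
  apply: eq_bigr => x1 _.
  rewrite (bigD1 y2) //= big1 => [|x2 ne]; last by rewrite (negbTE ne) !(mulr0, conjC0, mul0r).
  by rewrite eqxx addr0 rmorphM /= conjC1; ring.
rewrite -mulr_suml.
have -> : \sum_x1 (A x1 y1)^* * A x1 y1' = (y1 == y1')%:R.
  have := mulmx1C uA => /matrixP /(_ y1 y1'); rewrite !mxE => <-.
  by apply: eq_bigr => j _; rewrite /adjmx !mxE.
by rewrite xpair_eqE -natrM mulnb.
Qed.

Lemma lapply_lapply (T1 T2 T3 : finType) (A : lmap T1 T2) (B : lmap T2 T3) v x :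
  lapply A (lapply B v) x = \sum_z (\sum_y A x y * B y z) * v z.
Proof.
rewrite /lapply; under eq_bigr do rewrite mulr_sumr.
rewrite exchange_big; apply: eq_bigr => z _; rewrite mulr_suml.
by apply: eq_bigr => y _; rewrite mulrA.
Qed.

Lemma intertw (T1 T2 : finType) (W : lmap T1 T2) (Ug : lmap T1 T1) (B : lmap T2 T2) :
  (forall x x', \sum_y W x y * (W x' y)^* = lid x x') ->
  (forall y z, lcomp (ladj W) (lcomp Ug W) y z = B y z) ->
  forall x z, \sum_y Ug x y * W y z = \sum_y W x y * B y z.
Proof.
move=> HW HB x z.
transitivity (\sum_x' lid x x' * \sum_y Ug x' y * W y z).
  rewrite [RHS](bigD1 x) //= {1}/lid eqxx mul1r [X in _ = _ + X]big1 ?addr0 // => x' ne; by rewrite /lid eq_sym (negbTE ne) mul0r.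
under [RHS]eq_bigr do rewrite -HB /lcomp /ladj mulr_sumr.
rewrite exchange_big; apply: eq_bigr => x' _; rewrite -HW mulr_suml.
by apply: eq_bigr => y _; rewrite mulrA.
Qed.

Definition tg (I : finType) (d : I -> nat) (i : I) (l k : 'I_(d i)) : dsum_idx d :=
  Tagged (fun i => ('I_(d i) * 'I_(d i))%type) (l, k).
Arguments tg {I d} i l k.

Lemma sum_dsum (I : finType) (d : I -> nat) (F : dsum_idx d -> algC) :
  \sum_z F z = \sum_i \sum_(p : ('I_(d i) * 'I_(d i))%type) F (Tagged (fun i => ('I_(d i) * 'I_(d i))%type) p).
Proof.
rewrite (@sig_big_dep _ _ _ I (fun i => ('I_(d i) * 'I_(d i))%type) xpredT (fun i => xpredT) (fun i p => F (Tagged (fun i => ('I_(d i) * 'I_(d i))%type) p))) /=.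
by apply: eq_bigr => -[i p].
Qed.

Lemma blk_apply (I : finType) (d : I -> nat) (A : forall i, 'M[algC]_(d i))
  (wf : dsum_idx d -> algC) i (j k : 'I_(d i)) :
  lapply (blk_tens_id A) wf (tg i j k) = (A i *m \matrix_(l, k') wf (tg i l k')) j k.
Proof.
rewrite /lapply sum_dsum (bigD1 i) //= [X in _ + X]big1 => [|i' ne]; last first.
  by apply: big1 => p _; rewrite /blk_tens_id /= eq_sym (negbTE ne) mul0r.
rewrite addr0 mxE /blk_tens_id /= eqxx /mxnat.
under eq_bigr => p _ do rewrite !valK.
transitivity (\sum_(p : ('I_(d i) * 'I_(d i))%type) (A i j p.1 * (k == p.2)%:R * wf (tg i p.1 p.2))).
  by apply: eq_bigr => -[l k'].
rewrite -(pair_bigA _ (fun l k' => A i j l * (k == k')%:R * wf (tg i l k'))) /=.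
apply: eq_bigr => l _; rewrite mxE.
rewrite (bigD1 k) //= [X in _ + X]big1 => [|k' ne]; first by rewrite eqxx mulr1 addr0.
by rewrite eq_sym (negbTE ne) mulr0 mul0r.
Qed.

Lemma avg_entry (gT : finGroupType) (G : {group gT}) p q
  (r1 : mx_representation algC G p) (r2 : mx_representation algC G q)
  (Y1 : 'M[algC]_p) (Y2 : 'M[algC]_q) j k j' k' :
  avg r1 r2 (\matrix_(l, l') (Y1 l k * (Y2 l' k')^*)) j j' =
  \sum_(g in G) (r1 g *m Y1) j k * ((r2 g *m Y2) j' k')^*.
Proof.
rewrite /avg summxE; apply: eq_bigr => g _.
rewrite mxE [(r2 g *m Y2) j' k']mxE rmorph_sum mulr_sumr; apply: eq_bigr => l' _.
rewrite /radj !mxE !mulr_suml; apply: eq_bigr => l _.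
by rewrite !mxE rmorphM /=; ring.
Qed.

Lemma V_orth p (Psi Phi : 'M[algC]_p) : unitary_mx Psi -> unitary_mx Phi ->
  forall k k', \sum_l (Psi *m Phi^T) l k * ((Psi *m Phi^T) l k')^* = (k == k')%:R.
Proof.
move=> uPsi uPhi k k'.
set V := Psi *m Phi^T.
have -> : \sum_l V l k * (V l k')^* = (V^T *m map_mx conjC V) k k'.
  by rewrite mxE; apply: eq_bigr => l _; rewrite !mxE.
rewrite /V trmx_mul trmxK map_mxM -map_trmx mulmxA -(mulmxA Phi).
have -> : Psi^T *m map_mx conjC Psi = 1%:M.
  by rewrite -[map_mx conjC Psi]trmxK -trmx_mul (mulmx1C uPsi) trmx1.
by rewrite mulmx1 uPhi mxE.
Qed.

Lemma key (gT : finGroupType) (G : {group gT}) (I : finType) (d : I -> nat)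
  (rho : forall i : I, mx_representation algC G (d i)) (wf : dsum_idx d -> algC) :
  (forall i, mx_irreducible (rho i)) -> (forall i, unitary_rep (rho i)) ->
  (forall i j, mx_rsim (rho i) (rho j) -> i = j) ->
  (forall i (k k' : 'I_(d i)), \sum_l wf (tg i l k) * (wf (tg i l k'))^*
      = (d i)%:R / #|G|%:R * (k == k')%:R) ->
  forall z z' : dsum_idx d,
  \sum_(g in G) lapply (blk_tens_id (fun i => rho i g)) wf z
      * (lapply (blk_tens_id (fun i => rho i g)) wf z')^* = (z == z')%:R.
Proof.
move=> irr ur inj hw [i [j k]] [i' [j' k']].
change (existT _ i (j, k)) with (tg i j k).
change (existT _ i' (j', k')) with (tg i' j' k').
under eq_bigr do rewrite !blk_apply.
rewrite -avg_entry.
have [e|ne] := eqVneq i i'; last first.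
  have nsim : ~ mx_rsim (rho i) (rho i') by move/inj => e; rewrite e eqxx in ne.
  rewrite (avg_zero _ (irr i) (irr i') (ur i) (ur i') nsim) mxE.
  case: eqP => // /(congr1 tag) /= e.
  by rewrite e eqxx in ne.
subst i'.
rewrite (avg_scalar _ (irr i) (ur i)) mxE.
have dp : (0 < d i)%N by case/mx_irrP: (irr i).
have -> : \tr (\matrix_(l, l') ((\matrix_(l0, k'0) wf (tg i l0 k'0)) l k *
            ((\matrix_(l0, k'0) wf (tg i l0 k'0)) l' k')^*)) = 
          (d i)%:R / #|G|%:R * (k == k')%:R.
  rewrite -hw /mxtrace; apply: eq_bigr => l _; by rewrite !mxE.
rewrite -tag_eqE /tag_eq /= eqxx tagged_asE /= xpair_eqE.
have G0 : (#|G|%:R : algC) != 0 by rewrite pnatr_eq0 -lt0n cardG_gt0.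
have d0 : ((d i)%:R : algC) != 0 by rewrite pnatr_eq0 -lt0n.
case: eqP => _; case: eqP => _ /=; rewrite ?mulr0 ?mul0r ?mulr1 ?mulr1n ?mulr0n //. by field; rewrite d0 G0.
Qed.

Lemma maxent_mx p (P Q : 'M[algC]_p) j k : maxent P Q j k = (P *m Q^T) j k.
Proof. by rewrite mxE; apply: eq_bigr => l _; rewrite mxE. Qed.

Unset Implicit Arguments.
Set Strict Implicit.

Theorem theorem1 (gT : finGroupType) (G : {group gT})
  (n m : nat) (U : mx_representation algC G n)
  (I : finType) (d : I -> nat) (rho : forall i : I, mx_representation algC G (d i))
  (W : lmap ('I_n * 'I_m)%type (dsum_idx d))
  (Psi Phi : forall i : I, 'M[algC]_(d i))
  (a : I -> algC) (mu0 : I) :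
  (* U is a unitary representation of G on H = C^n *)
  (forall g, g \in G -> unitary_mx (U g)) ->
  (* (rho i)_{i in I} is a complete family of pairwise inequivalent
     unitary irreducible representations of G (i.e. I = \hat G) *)
  (forall i, mx_irreducible (rho i)) ->
  (forall i g, g \in G -> unitary_mx (rho i g)) ->
  (forall i j, mx_rsim (rho i) (rho j) -> i = j) ->
  (forall k (r : mx_representation algC G k), mx_irreducible r ->
     exists i, mx_rsim r (rho i)) ->
  (* unitary identification H ⊗ R ≅ ⊕_μ H_μ ⊗ C^{d_μ} intertwining
     U_g ⊗ I_R with ⊕_μ U^μ_g ⊗ I *)
  lunitary W ->
  (forall g, g \in G -> forall x y,
     lcomp (ladj W) (lcomp (@tens_id n m (U g)) W) x y
     = blk_tens_id (fun i => rho i g) x y) ->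
  (* orthonormal bases {ψ^μ_j} and {φ^μ_j} (as columns) *)
  (forall i, unitary_mx (Psi i)) ->
  (forall i, unitary_mx (Phi i)) ->
  \sum_i `|a i| ^+ 2 = 1 ->
  (forall i, (d i)%:R * `|a i| <= (d mu0)%:R * `|a mu0|) ->
  (d mu0)%:R * `|a mu0| <= \sum_(i | i != mu0) (d i)%:R * `|a i| ->
  let psi := lapply W (psi_dsum a Psi Phi) in
  let u := fun g => lapply (@tens_id n m (U g)) psi in
  exists M : gT -> lmap ('I_n * 'I_m)%type ('I_n * 'I_m)%type,
    (forall g, g \in G -> psd (M g)) /\
    (forall x y, \sum_(g in G) M g x y = lid x y) /\
    (forall g, g \in G -> inner (u g) (lapply (M g) (u g)) = 0).
Proof.
move=> uU irr urho inj _ [WW1 WW2] Hint uPsi uPhi asum amax asum2 psi u.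
have ur : forall i, unitary_rep (rho i) by move=> i g Gg; exact: urho.
have rreal : forall i, (d i)%:R * `|a i| \is Num.real.
  by move=> i; rewrite ger0_real // mulr_ge0 ?ler0n.
pose r i := in_algR (rreal i).
have [z [zn zs]] : exists z : I -> algC, (forall i, `|z i| = 1) /\
    \sum_i z i * algRval (r i) = 0.
  apply: (@polygon I r mu0).
  - by move=> i; rewrite algR_leE /= mulr_ge0 ?ler0n.
  - by move=> i; rewrite algR_leE /=; exact: amax.
  - by rewrite algR_leE rmorph_sum /=.
have ephase : forall i, exists e : algC, (`|e| == 1) && (a i == e * `|a i|).
  by move=> i; have [e0 [h1 h2]] := phase (a i); exists e0; rewrite h1 -h2 !eqxx.
pose e i := xchoose (ephase i).
have he : forall i, `|e i| = 1 /\ a i = e i * `|a i|.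
  by move=> i; have /andP [/eqP h1 /eqP h2] := xchooseP (ephase i).
pose c i := (z i)^* * e i.
pose s i : algC := sqrtC (d i)%:R / sqrtC #|G|%:R.
pose wf (x : dsum_idx d) := c (tag x) * s (tag x) *
   maxent (Psi (tag x)) (Phi (tag x)) (tagged x).1 (tagged x).2.
pose B g := blk_tens_id (fun i => rho i g).
pose v g x := \sum_y W x y * lapply (B g) wf y.
exists (fun g x y => v g x * (v g y)^*).
have G0 : (#|G|%:R : algC) != 0 by rewrite pnatr_eq0 -lt0n cardG_gt0.
have sG0 : sqrtC (#|G|%:R : algC) != 0 by rewrite sqrtC_eq0.
have s_ge0 : forall i, 0 <= s i by move=> i; rewrite divr_ge0 // sqrtC_ge0 ler0n.
have s2 : forall i, s i * (s i)^* = (d i)%:R / #|G|%:R.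
  move=> i; rewrite geC0_conj // -expr2 /s exprMn exprVn !sqrtCK //.
have c1 : forall i, c i * (c i)^* = 1.
  by move=> i; rewrite -normCK /c normrM norm_conjC zn (proj1 (he i)) mulr1 expr1n.
have hw : forall i (k k' : 'I_(d i)), \sum_l wf (tg i l k) * (wf (tg i l k'))^*
      = (d i)%:R / #|G|%:R * (k == k')%:R.
  move=> i k k'; rewrite -(V_orth (uPsi i) (uPhi i)) mulr_sumr.
  apply: eq_bigr => l _; rewrite /wf /= !maxent_mx.
  move: (c i) (s i) (c1 i) (s2 i) => ci si c1i s2i.
  rewrite -s2i mulrA; transitivity (ci * (ci)^* * (si * si^*) *
     ((Psi i *m (Phi i)^T) l k * ((Psi i *m (Phi i)^T) l k')^*)).
    by rewrite !rmorphM /=; ring.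
  by rewrite c1i mul1r mulrA.
have KEY := key irr ur inj hw.
have inter : forall g, g \in G -> forall x z0,
    \sum_y tens_id (U g) x y * W y z0 = \sum_y W x y * B g y z0.
  by move=> g Gg; apply: intertw; [exact: WW2 | exact: Hint].
have vE : forall g, g \in G -> forall x, v g x = lapply (tens_id (U g)) (lapply W wf) x.
  move=> g Gg x; rewrite lapply_lapply.
  under [RHS]eq_bigr do rewrite inter //.
  rewrite /v /lapply [LHS](eq_bigr (fun y => \sum_y0 W x y * (B g y y0 * wf y0)));
    last by move=> y _; rewrite mulr_sumr.
  rewrite exchange_big; apply: eq_bigr => z0 _; rewrite mulr_suml.
  by apply: eq_bigr => y _; rewrite mulrA.
split; first by move=> g _; exact: rank1_psd.
split.
  move=> x y.
  transitivity (\sum_(g in G) \sum_z0 \sum_z1 ((W x z0 * (W y z1)^*) *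
      (lapply (B g) wf z0 * (lapply (B g) wf z1)^*))).
    apply: eq_bigr => g _; rewrite /v rmorph_sum mulr_suml; apply: eq_bigr => z0 _.
    rewrite mulr_sumr; apply: eq_bigr => z1 _; rewrite rmorphM /=; ring.
  rewrite exchange_big.
  transitivity (\sum_z0 \sum_z1 (W x z0 * (W y z1)^*) * (z0 == z1)%:R).
    apply: eq_bigr => z0 _; rewrite exchange_big; apply: eq_bigr => z1 _.
    by rewrite -mulr_sumr /B KEY.
  rewrite -[RHS]WW2 /lcomp /ladj; apply: eq_bigr => z0 _.
  rewrite (bigD1 z0) //= eqxx mulr1 [X in _ + X]big1 ?addr0 // => z1 ne.
  by rewrite eq_sym (negbTE ne) mulr0.
move=> g Gg; rewrite rank1_inner.
suff -> : inner (v g) (u g) = 0 by rewrite mulr0.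
have -> : inner (v g) (u g) = inner (lapply (tens_id (U g)) (lapply W wf)) (u g).
  by apply: eq_bigr => x _; rewrite vE.
rewrite /u /psi inner_iso; last exact: tens_unitary (uU g Gg).
rewrite inner_iso; last exact: WW1.
rewrite /inner sum_dsum.
transitivity (\sum_i (sqrtC #|G|%:R)^-1 * (z i * algRval (r i))); last first.
  by rewrite -mulr_sumr zs mulr0.
apply: eq_bigr => i _.
transitivity ((c i)^* * s i * (a i / sqrtC (d i)%:R) *
   \sum_(p : ('I_(d i) * 'I_(d i))%type)
      ((Psi i *m (Phi i)^T) p.1 p.2)^* * (Psi i *m (Phi i)^T) p.1 p.2).
  rewrite mulr_sumr; apply: eq_bigr => p _.
  rewrite /wf /psi_dsum /= !maxent_mx; move: (c i) (s i) (s_ge0 i) => ci si si0.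
  rewrite !rmorphM /= (geC0_conj si0); ring.
have -> : \sum_(p : ('I_(d i) * 'I_(d i))%type)
      ((Psi i *m (Phi i)^T) p.1 p.2)^* * (Psi i *m (Phi i)^T) p.1 p.2 = (d i)%:R.
  rewrite -(pair_bigA _ (fun j k => ((Psi i *m (Phi i)^T) j k)^* * (Psi i *m (Phi i)^T) j k)) /=.
  rewrite exchange_big /= (eq_bigr (fun _ => 1)); first by rewrite sumr_const card_ord.
  move=> k _; transitivity ((k == k)%:R : algC); last by rewrite eqxx.
  rewrite -(V_orth (uPsi i) (uPhi i) k k).
  by apply: eq_bigr => j _; rewrite mulrC.
have ee : (e i)^* * e i = 1 by rewrite mulrC -normCK (proj1 (he i)) expr1n.
have d0 : sqrtC ((d i)%:R : algC) != 0.
  by rewrite sqrtC_eq0 pnatr_eq0 -lt0n; case/mx_irrP: (irr i).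
rewrite /=; move: (proj2 (he i)) ee d0; rewrite /c /s.
set na := `|a i|; move: (a i) (e i) (z i) => ai ei zi -> ee d0.
rewrite rmorphM /= conjCK.
transitivity (zi * (ei^* * ei) * na * (d i)%:R * (sqrtC (d i)%:R / sqrtC (d i)%:R)
   / sqrtC #|G|%:R); first by ring.
by rewrite ee divff //; ring.
Qed.
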